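(* Let $P=\{x\in\mathbb{R}^n: Ax\ge b\}$ with rational data be full-dimensional and pointed, let $\mathcal{I}\subseteq\{1,\dots,n\}$ and $P_I=\{x\in P: x_j\in\mathbb{Z}\text{ for all } j\in\mathcal{I}\}$. Let $\mathcal{P},\mathcal{R}\subset\mathbb{R}^n$ be finite sets of points and rays. Then the point-ray collection $(\mathcal{P},\mathcal{R})$ is proper if and only if $P_I\subseteq \operatorname{conv}(\mathcal{P})+\operatorname{cone}(\mathcal{R})$.
   Context: The point-ray linear program (PRLP) for $(\mathcal{P},\mathcal{R})$ has feasible region $\{(\alpha,\beta)\in\mathbb{R}^n\times\mathbb{R}: \alpha^\top p\ge\beta\ \forall p\in\mathcal{P},\ \alpha^\top r\ge 0\ \forall r\in\mathcal{R}\}$. The collection $(\mathcal{P},\mathcal{R})$ is called proper if $\alpha^\top x\ge\beta$ is a valid inequality for $P_I$ whenever $(\alpha,\beta)$ is feasible for the PRLP. *)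

(* Defs.v *)
From HB Require Import structures.
From mathcomp Require Import all_boot all_order all_algebra.
From mathcomp Require Import reals.
Set Implicit Arguments. Unset Strict Implicit. Unset Printing Implicit Defensive.
Import Order.TTheory GRing.Theory Num.Theory.
Local Open Scope ring_scope.

Section Defs.
Variable R : realType.

Definition dotv n (a x : 'cV[R]_n) : R := \sum_(i < n) a i 0 * x i 0.

Definition in_poly m n (A : 'M[R]_(m, n)) (b : 'cV[R]_m) (x : 'cV[R]_n) : Prop :=
  forall i, b i 0 <= (A *m x) i 0.

Definition rational_mx m n (A : 'M[R]_(m, n)) : Prop :=
  forall i j, exists q : rat, A i j = ratr q.

Definition in_PI m n (A : 'M[R]_(m, n)) (b : 'cV[R]_m) (I : {set 'I_n})
  (x : 'cV[R]_n) : Prop :=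
  in_poly A b x /\ (forall j, j \in I -> x j 0 \is a Num.int).

Definition full_dim m n (A : 'M[R]_(m, n)) (b : 'cV[R]_m) : Prop :=
  exists p : 'I_n.+1 -> 'cV[R]_n,
    (forall i, in_poly A b (p i)) /\
    \rank (\matrix_(i < n, j < n) (p (lift ord0 i) j 0 - p ord0 j 0)) = n.

Definition pointed m n (A : 'M[R]_(m, n)) (b : 'cV[R]_m) : Prop :=
  ~ exists (x d : 'cV[R]_n),
      [/\ in_poly A b x, d != 0 & forall t : R, in_poly A b (x + t *: d)].

Definition in_conv_cone n k l (pts : 'I_k -> 'cV[R]_n) (rays : 'I_l -> 'cV[R]_n)
  (x : 'cV[R]_n) : Prop :=
  exists (lam : 'I_k -> R) (mu : 'I_l -> R),
    [/\ forall i, 0 <= lam i, \sum_i lam i = 1, forall j, 0 <= mu j &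
        x = \sum_i lam i *: pts i + \sum_j mu j *: rays j].

Definition prlp_feasible n k l (pts : 'I_k -> 'cV[R]_n) (rays : 'I_l -> 'cV[R]_n)
  (alpha : 'cV[R]_n) (beta : R) : Prop :=
  (forall i, beta <= dotv alpha (pts i)) /\ (forall j, 0 <= dotv alpha (rays j)).

Definition proper_collection m n k l (A : 'M[R]_(m, n)) (b : 'cV[R]_m)
  (I : {set 'I_n}) (pts : 'I_k -> 'cV[R]_n) (rays : 'I_l -> 'cV[R]_n) : Prop :=
  forall alpha beta, prlp_feasible pts rays alpha beta ->
    forall x, in_PI A b I x -> beta <= dotv alpha x.
End Defs.

(* Main.v *)
Require Import Defs.
From HB Require Import structures.
From mathcomp Require Import all_boot all_order all_algebra.
From mathcomp Require Import reals.
From mathcomp Require Import ring.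
From Stdlib Require Import Classical.
Import Order.TTheory GRing.Theory Num.Theory.
Local Open Scope ring_scope.

Section Farkas.
Variables (R : realFieldType) (X : Type) (neg : X -> X) (comb : X -> X -> R -> X).

Definition linf (f : X -> R) :=
  (forall x, f (neg x) = - f x) /\
  (forall x z t, f (comb x z t) = f x - t * f z).

Lemma linf_comb f g c : linf f -> linf g -> linf (fun x => f x - c * g x).
Proof.
move=> [f1 f2] [g1 g2]; split=> [x|x z t]; first by rewrite f1 g1; ring.
by rewrite f2 g2; ring.
Qed.

Lemma farkas m : forall (a : 'I_m -> X -> R) (y : X -> R),
  (forall i, linf (a i)) -> linf y ->
  (forall x, (forall i, 0 <= a i x) -> 0 <= y x) ->
  exists lam : 'I_m -> R, (forall i, 0 <= lam i) /\
    forall x, y x = \sum_i lam i * a i x.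
Proof.
elim: m => [|m IH] a y La Ly H.
  exists (fun _ => 0); split=> // x; rewrite big_ord0.
  have h1 := H x; have h2 := H (neg x).
  have e : forall z : 'I_0, False by case.
  have p1 : 0 <= y x by apply: h1 => i; case: (e i).
  have p2 : 0 <= y (neg x) by apply: h2 => i; case: (e i).
  move: p2; rewrite (proj1 Ly) oppr_ge0 => p2.
  by apply/eqP; rewrite eq_le p2 p1.
case: (classic (exists x0, (forall i, 0 <= a (lift ord0 i) x0) /\ y x0 < 0)).
  move=> [x0 [Hx0 Hy0]].
  set a0 := a ord0.
  have a0neg : a0 x0 < 0.
    rewrite ltNge; apply/negP => h.
    have : 0 <= y x0.
      apply: H => i; case: (unliftP ord0 i) => [j ->|->]; first exact: Hx0.
      exact: h.
    by rewrite leNgt Hy0.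
  have a0nz : a0 x0 != 0 by rewrite lt_eqF.
  pose a' i x := a (lift ord0 i) x - (a (lift ord0 i) x0 / a0 x0) * a0 x.
  pose y' x := y x - (y x0 / a0 x0) * a0 x.
  have [lam [lam0 Hlam]] : exists lam : 'I_m -> R, (forall i, 0 <= lam i) /\
    forall x, y' x = \sum_i lam i * a' i x.
    apply: IH.
      move=> i; rewrite /a' /a0; apply: linf_comb; exact: La.
      rewrite /y' /a0; apply: linf_comb => //; exact: La.
    move=> x Hx.
    pose z := comb x x0 (a0 x / a0 x0).
    have ez : forall f, linf f -> f z = f x - (f x0 / a0 x0) * a0 x.
      by move=> f [_ f2]; rewrite /z f2; ring.
    have : 0 <= y z.
      apply: H => i; case: (unliftP ord0 i) => [j ->|->].
        by rewrite ez //; apply: Hx.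
      rewrite ez // divff // mul1r subrr //.
    by rewrite ez.
  pose S3 := \sum_i lam i * a (lift ord0 i) x0.
  pose mu := (y x0 - S3) / a0 x0.
  exists (fun i => match unlift ord0 i with Some j => lam j | None => mu end).
  split.
    move=> i; case: (unlift ord0 i) => [j|] //.
    rewrite /mu mulr_le0 //; last by rewrite invr_le0 ltW.
    rewrite subr_le0; apply: le_trans (ltW Hy0) _.
    by apply: sumr_ge0 => i' _; apply: mulr_ge0.
  move=> x; rewrite big_ord_recl unlift_none.
  under eq_bigr do rewrite liftK.
  have e := Hlam x; rewrite /y' /a' in e.
  rewrite (eq_bigr (fun i => lam i * a (lift ord0 i) x - lam i * (a (lift ord0 i) x0 / a0 x0 * a0 x))) in e; last by move=> i _; rewrite mulrBr.
  rewrite sumrB in e.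
  have e2 : \sum_i lam i * (a (lift ord0 i) x0 / a0 x0 * a0 x) = S3 / a0 x0 * a0 x.
    rewrite /S3 mulr_suml mulr_suml; apply: eq_bigr => i _; ring.
  rewrite e2 in e.
  rewrite /mu /a0 in e *.
  move: e; set S1 := \sum_(i < m) _ => e.
  have -> : y x = (y x - y x0 / a ord0 x0 * a ord0 x) + y x0 / a ord0 x0 * a ord0 x by ring.
  rewrite e; ring.
move=> Hn.
have Hy : forall x, (forall i, 0 <= a (lift ord0 i) x) -> 0 <= y x.
  move=> x Hx; rewrite leNgt; apply/negP => h; apply: Hn; exists x; split=> //.
have [lam [lam0 Hlam]] := IH (fun i => a (lift ord0 i)) y (fun i => La _) Ly Hy.
exists (fun i => match unlift ord0 i with Some j => lam j | None => 0 end).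
split; first by move=> i; case: (unlift ord0 i).
move=> x; rewrite big_ord_recl unlift_none mul0r add0r Hlam.
by apply: eq_bigr => i _; rewrite liftK.
Qed.
End Farkas.

Section Main.
Variable R : realType.

Lemma dotvBZ n (u v x : 'cV[R]_n) t : dotv (u - t *: v) x = dotv u x - t * dotv v x.
Proof.
rewrite /dotv mulr_sumr -sumrB; apply: eq_bigr => i _; rewrite !mxE; ring.
Qed.

Lemma dotvN n (u x : 'cV[R]_n) : dotv (- u) x = - dotv u x.
Proof. by rewrite /dotv -sumrN; apply: eq_bigr => i _; rewrite !mxE mulNr. Qed.

Lemma dotv0 n (x : 'cV[R]_n) : dotv 0 x = 0.
Proof. by rewrite /dotv big1 // => i _; rewrite mxE mul0r. Qed.

Lemma dotv_delta n (r : 'I_n) (x : 'cV[R]_n) : dotv (delta_mx r 0) x = x r 0.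
Proof.
rewrite /dotv (bigD1 r) //= big1 ?addr0; first by rewrite mxE !eqxx mul1r.
by move=> i /negbTE h; rewrite mxE h mul0r.
Qed.

Lemma dotv_sum n I (s : seq I) (F : I -> 'cV[R]_n) (a : 'cV[R]_n) :
  dotv a (\sum_(i <- s) F i) = \sum_(i <- s) dotv a (F i).
Proof.
rewrite /dotv exchange_big /=; apply: eq_bigr => j _.
by rewrite summxE mulr_sumr.
Qed.

Lemma dotvD n (a u v : 'cV[R]_n) : dotv a (u + v) = dotv a u + dotv a v.
Proof. by rewrite /dotv -big_split; apply: eq_bigr => i _; rewrite mxE mulrDr. Qed.

Lemma dotvZ n (a u : 'cV[R]_n) c : dotv a (c *: u) = c * dotv a u.
Proof. by rewrite /dotv mulr_sumr; apply: eq_bigr => i _; rewrite mxE; ring. Qed.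

End Main.

Theorem corollary1 (R : realType) (m n k l : nat)
  (A : 'M[R]_(m, n)) (b : 'cV[R]_m) (I : {set 'I_n})
  (pts : 'I_k -> 'cV[R]_n) (rays : 'I_l -> 'cV[R]_n) :
  rational_mx A -> rational_mx b -> full_dim A b -> pointed A b ->
  (proper_collection A b I pts rays <->
   (forall x, in_PI A b I x -> in_conv_cone pts rays x)).
Proof.
move=> _ _ _ _; split; last first.
  move=> H alpha beta [Hp Hr] x Hx.
  have [lam [mu [lam0 lam1 mu0 ->]]] := H x Hx.
  rewrite dotvD !dotv_sum.
  rewrite -[beta]addr0; apply: lerD.
    apply: (@le_trans _ _ (\sum_i lam i * beta)).
      by rewrite -mulr_suml lam1 mul1r.
    by apply: ler_sum => i _; rewrite dotvZ; apply: ler_wpM2l.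
  by apply: sumr_ge0 => j _; rewrite dotvZ; apply: mulr_ge0.
move=> Hprop x Hx.
pose X := ('cV[R]_n * R)%type.
pose neg (c : X) : X := (- c.1, - c.2).
pose comb (c z : X) (t : R) : X := (c.1 - t *: z.1, c.2 - t * z.2).
pose F (i : 'I_(k + l)) : X -> R :=
  match split i with
  | inl i => fun c => dotv c.1 (pts i) - c.2
  | inr j => fun c => dotv c.1 (rays j) end.
pose y (c : X) := dotv c.1 x - c.2.
have Lf : forall v : 'cV[R]_n, linf R X neg comb (fun c : X => dotv c.1 v - c.2).
  move=> v; split=> [c|c z t] /=; first by rewrite dotvN; ring.
  by rewrite dotvBZ; ring.
have [lam [lam0 Hlam]] : exists lam : 'I_(k + l) -> R, (forall i, 0 <= lam i) /\
    forall c, y c = \sum_i lam i * F i c.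
  apply: (@farkas _ _ neg comb).
  - move=> i; rewrite /F; case: (split i) => [i'|j]; first exact: Lf.
    split=> [c|c z t] /=; first by rewrite dotvN.
    by rewrite dotvBZ.
  - exact: Lf.
  move=> [al be] Hc; rewrite /y /= subr_ge0.
  apply: (Hprop al be) => //; split.
    move=> i; have := Hc (lshift l i); rewrite /F (unsplitK (inl i) : split (lshift l i) = inl i) /=.
    by rewrite subr_ge0.
  by move=> j; have := Hc (rshift k j); rewrite /F (unsplitK (inr j) : split (rshift k j) = inr j).
exists (fun i => lam (lshift l i)), (fun j => lam (rshift k j)); split.
- by move=> i; apply: lam0.
- have := Hlam (0, 1); rewrite /y /= dotv0 big_split_ord /=.
  under eq_bigr => i _ do rewrite /F (unsplitK (inl i) : split (lshift l i) = inl i) /= dotv0.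
  rewrite [in Y in _ = _ + Y](eq_bigr (fun j => 0)); last first.
    by move=> j _; rewrite /F (unsplitK (inr j) : split (rshift k j) = inr j) /= dotv0 mulr0.
  rewrite big1_eq addr0 => e.
  have e2 : \sum_i lam (lshift l i) * (0 - 1) = - \sum_i lam (lshift l i).
    by rewrite -sumrN; apply: eq_bigr => i _; ring.
  by rewrite e2 in e; apply: oppr_inj; rewrite -e sub0r.
- by move=> j; apply: lam0.
apply/matrixP => r s; rewrite (ord1 s).
have := Hlam (delta_mx r 0, 0); rewrite /y /= dotv_delta subr0 big_split_ord /=.
under eq_bigr => i _ do rewrite /F (unsplitK (inl i) : split (lshift l i) = inl i) /= dotv_delta subr0.
rewrite (eq_bigr (fun j => lam (rshift k j) * rays j r 0)); last first.
  by move=> j _; rewrite /F (unsplitK (inr j) : split (rshift k j) = inr j) /= dotv_delta.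
move=> ->; rewrite !mxE !summxE; congr (_ + _); apply: eq_bigr => i _; by rewrite !mxE.
Qed.
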